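(* Let $J_j(x)=\tfrac{c_j}{2}x^2+\bar c_jx$ with $c_j>0$, and let $\rho>0$. Consider the system in the variables $z=(\hat q,\tilde\theta)\in\mathbb{R}^n\times\mathbb{R}^{|\mathcal E|}$ and $\sigma=(\lambda,\omega,\alpha,\eta)\in\mathbb{R}\times\mathbb{R}^n\times\mathbb{R}^n\times\mathbb{R}^{2|\mathcal E|}$, with $\pi:=\lambda\mathbf 1-H\eta-\omega$ and $q:=\tfrac1\rho(\pi-\alpha)+\hat q$: \[ \dot{\tilde\theta}=C^T\omega,\qquad M\dot\omega=q-d-D\omega-CB\tilde\theta, \] \[ \tau^\alpha_j\dot\alpha_j=q_j-\frac{\pi_j-\bar c_j}{c_j}\ (j=1,\dots,n),\qquad T^{\hat q}\dot{\hat q}=\pi-\alpha, \] \[ T^\lambda\dot\lambda=-\mathbf 1^T(q-d),\qquad T^\eta\dot\eta=\big[H^T(q-d)-F\big]^+_\eta, \] with initial points satisfying $\eta(0)\ge0$. Then a point $(z^*,\sigma^* )$ (with $\eta^*\ge0$) is an equilibrium of this system if and only if, setting $p^*_j:=(\pi^*_j-\bar c_j)/c_j$ with $\pi^*=\lambda^*\mathbf 1-H\eta^*-\omega^*$, $q^*:=\tfrac1\rho(\pi^*-\alpha^* )+\hat q^*$ and $\nu^*:=\omega^*$, the tuple $(p^*,q^*,\omega^*,\tilde\theta^*,\alpha^*,\lambda^*,\eta^*,\nu^* )$ is an optimal primal-dual solution of the planner's problem \[ \min_{p,q,\omega\in\mathbb{R}^n,\,\tilde\theta\in\mathbb{R}^{|\mathcal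 E|}}\ \sum_jJ_j(p_j)+\tfrac12\omega^TD\omega \] subject to $q=p$ (multiplier $\alpha$), $\mathbf 1^T(q-d)=0$ (multiplier $\lambda$), $H^T(q-d)\le F$ (multiplier $\eta\ge0$), $q-d-D\omega-CB\tilde\theta=0$ (multiplier $\nu$).
   Context: $(\mathcal N,\mathcal E)$ is a connected directed graph with $\mathcal N=\{1,\dots,n\}$; $C$ is its incidence matrix ($C_{j,e}=1$ if $e=(j,k)$, $-1$ if $e=(k,j)$, $0$ otherwise). $B$, $D$, $M$ are diagonal with positive diagonal entries; $T^{\hat q},T^\lambda,T^\eta$ are diagonal (or positive scalar) with positive entries, and $\tau^\alpha_j>0$. $L:=CBC^T$, $H\in\mathbb{R}^{n\times2|\mathcal E|}$ with $H^T=\begin{bmatrix} BC^TL^\dagger\\ -BC^TL^\dagger\end{bmatrix}$ ($L^\dagger$ Moore–Penrose inverse), $F=\begin{bmatrix}\overline F\\-\underline F\end{bmatrix}$, $d\in\mathbb{R}^n$ given. Projection: for vectors $y,u$, $([y]^+_u)_e=y_e$ if $y_e>0$ or $u_e>0$, and $0$ otherwise. Optimal primal-dual solutions are with respect to the Lagrangian $\sum_jJ_j(p_j)+\tfrac12\omega^TD\omega+\nu^T(q-d-D\omega-CB\tilde\theta)+\alpha^T(q-p)-\lambda\mathbf 1^T(q-d)+\eta^T(H^T(q-d)-F)$. (The system models linearized swing dynamics, generators' price-bid updates comparing dispatch with their profit-maximizing output at price $\pi$, and regularized market dispatch/pricing with virtual dispatch $\hat q$.) *)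

(* Defs.v *)
From HB Require Import structures.
From mathcomp Require Import all_boot all_order all_algebra.
Set Implicit Arguments. Unset Strict Implicit. Unset Printing Implicit Defensive.
Import Order.TTheory GRing.Theory Num.Theory.
Local Open Scope ring_scope.

Definition incidence (R : pzRingType) (n m : nat) (src dst : 'I_m -> 'I_n) : 'M[R]_(n, m) :=
  \matrix_(j, e) (if src e == j then 1 else if dst e == j then -1 else 0).

Definition adj (n m : nat) (src dst : 'I_m -> 'I_n) : rel 'I_n :=
  fun j k => [exists e, ((src e == j) && (dst e == k)) || ((src e == k) && (dst e == j))].

Definition graph_connected (n m : nat) (src dst : 'I_m -> 'I_n) : Prop :=
  forall j k : 'I_n, connect (adj src dst) j k.

Definition diagm (R : pzRingType) (k : nat) (v : 'I_k -> R) : 'M[R]_k :=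
  diag_mx (\row_i v i).

Definition is_MP_inverse (R : pzRingType) (k : nat) (A X : 'M[R]_k) : Prop :=
  [/\ A *m X *m A = A, X *m A *m X = X, (A *m X)^T = A *m X & (X *m A)^T = X *m A].

Definition Hmat (R : pzRingType) (n m : nat) (C : 'M[R]_(n, m)) (b : 'I_m -> R)
  (Ldag : 'M[R]_n) : 'M[R]_(n, m + m) :=
  (col_mx (diagm b *m C^T *m Ldag) (- (diagm b *m C^T *m Ldag)))^T.

Definition onev (R : pzRingType) (k : nat) : 'cV[R]_k := const_mx 1.

Definition dotv (R : pzRingType) (k : nat) (u v : 'cV[R]_k) : R := \sum_i u i 0 * v i 0.

Definition sumv (R : pzRingType) (k : nat) (u : 'cV[R]_k) : R := \sum_i u i 0.

Definition projp (R : numDomainType) (k : nat) (y u : 'cV[R]_k) : 'cV[R]_k :=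
  \col_e (if (0 < y e 0) || (0 < u e 0) then y e 0 else 0).

Definition nonnegv (R : numDomainType) (k : nat) (u : 'cV[R]_k) : Prop :=
  forall i, 0 <= u i 0.

Definition price_of (R : pzRingType) (n m : nat) (H : 'M[R]_(n, m + m))
  (lam : R) (eta : 'cV[R]_(m + m)) (omega : 'cV[R]_n) : 'cV[R]_n :=
  lam *: onev R n - H *m eta - omega.

Definition q_of (R : fieldType) (n : nat) (rho : R) (pi alpha qhat : 'cV[R]_n) : 'cV[R]_n :=
  rho^-1 *: (pi - alpha) + qhat.

Definition is_equilibrium (R : realFieldType) (n m : nat)
  (C : 'M[R]_(n, m)) (b : 'I_m -> R) (dd mm : 'I_n -> R) (H : 'M[R]_(n, m + m))
  (c cbar : 'I_n -> R) (rho : R)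
  (tq tau : 'I_n -> R) (tl : R) (te : 'I_(m + m) -> R)
  (d : 'cV[R]_n) (F : 'cV[R]_(m + m))
  (qhat : 'cV[R]_n) (theta : 'cV[R]_m)
  (lam : R) (omega alpha : 'cV[R]_n) (eta : 'cV[R]_(m + m)) : Prop :=
  let pi := price_of H lam eta omega in
  let q := q_of rho pi alpha qhat in
  let thetadot : 'cV[R]_m := C^T *m omega in
  let omegadot : 'cV[R]_n :=
    \col_j ((q - d - diagm dd *m omega - C *m diagm b *m theta) j 0 / mm j) in
  let alphadot : 'cV[R]_n :=
    \col_j ((q j 0 - (pi j 0 - cbar j) / c j) / tau j) in
  let qhatdot : 'cV[R]_n := \col_j ((pi - alpha) j 0 / tq j) in
  let lamdot : R := - sumv (q - d) / tl in
  let etadot : 'cV[R]_(m + m) :=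
    \col_e ((projp (H^T *m (q - d) - F) eta) e 0 / te e) in
  [/\ thetadot = 0, omegadot = 0, alphadot = 0, qhatdot = 0 & (lamdot = 0 /\ etadot = 0)].

Definition Lagr (R : realFieldType) (n m : nat)
  (C : 'M[R]_(n, m)) (b : 'I_m -> R) (dd : 'I_n -> R) (H : 'M[R]_(n, m + m))
  (c cbar : 'I_n -> R) (d : 'cV[R]_n) (F : 'cV[R]_(m + m))
  (p q omega : 'cV[R]_n) (theta : 'cV[R]_m)
  (alpha : 'cV[R]_n) (lam : R) (eta : 'cV[R]_(m + m)) (nu : 'cV[R]_n) : R :=
  \sum_j (c j / 2 * p j 0 ^+ 2 + cbar j * p j 0)
  + 1 / 2 * dotv omega (diagm dd *m omega)
  + dotv nu (q - d - diagm dd *m omega - C *m diagm b *m theta)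
  + dotv alpha (q - p)
  - lam * sumv (q - d)
  + dotv eta (H^T *m (q - d) - F).

(* Optimal primal-dual solution = saddle point of the Lagrangian, with the
   multiplier eta of the inequality constraint nonnegative. *)
Definition optimal_primal_dual (R : realFieldType) (n m : nat)
  (C : 'M[R]_(n, m)) (b : 'I_m -> R) (dd : 'I_n -> R) (H : 'M[R]_(n, m + m))
  (c cbar : 'I_n -> R) (d : 'cV[R]_n) (F : 'cV[R]_(m + m))
  (p q omega : 'cV[R]_n) (theta : 'cV[R]_m)
  (alpha : 'cV[R]_n) (lam : R) (eta : 'cV[R]_(m + m)) (nu : 'cV[R]_n) : Prop :=
  let L := Lagr C b dd H c cbar d F in
  [/\ nonnegv eta,
      (forall (p' q' omega' : 'cV[R]_n) (theta' : 'cV[R]_m),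
          L p q omega theta alpha lam eta nu <= L p' q' omega' theta' alpha lam eta nu)
    & (forall (alpha' : 'cV[R]_n) (lam' : R) (eta' : 'cV[R]_(m + m)) (nu' : 'cV[R]_n),
          nonnegv eta' ->
          L p q omega theta alpha' lam' eta' nu' <= L p q omega theta alpha lam eta nu)].

(* Main.v *)
Require Import Defs.
From HB Require Import structures.
From mathcomp Require Import all_boot all_order all_algebra.
From mathcomp Require Import ring lra.
Import Order.TTheory GRing.Theory Num.Theory.
Set Implicit Arguments. Unset Strict Implicit. Unset Printing Implicit Defensive.
Local Open Scope ring_scope.

Section H.
Variable R : realFieldType.

Lemma dotvE k (u v : 'cV[R]_k) : dotv u v = (u^T *m v) 0 0.
Proof. rewrite /dotv mxE; apply: eq_bigr => i _; by rewrite mxE. Qed.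

Lemma dotvDr k (u v w : 'cV[R]_k) : dotv u (v + w) = dotv u v + dotv u w.
Proof. by rewrite !dotvE mulmxDr mxE. Qed.
Lemma dotvNr k (u v : 'cV[R]_k) : dotv u (- v) = - dotv u v.
Proof. by rewrite !dotvE mulmxN mxE. Qed.
Lemma dotvBr k (u v w : 'cV[R]_k) : dotv u (v - w) = dotv u v - dotv u w.
Proof. by rewrite dotvDr dotvNr. Qed.
Lemma dotvDl k (u v w : 'cV[R]_k) : dotv (v + w) u = dotv v u + dotv w u.
Proof. by rewrite !dotvE linearD /= mulmxDl mxE. Qed.
Lemma dotvNl k (u v : 'cV[R]_k) : dotv (- v) u = - dotv v u.
Proof. by rewrite !dotvE linearN /= mulNmx mxE. Qed.
Lemma dotvBl k (u v w : 'cV[R]_k) : dotv (v - w) u = dotv v u - dotv w u.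
Proof. by rewrite dotvDl dotvNl. Qed.
Lemma dotvZl k a (u v : 'cV[R]_k) : dotv (a *: v) u = a * dotv v u.
Proof. by rewrite !dotvE linearZ /= -scalemxAl mxE. Qed.
Lemma dotv0l k (u : 'cV[R]_k) : dotv 0 u = 0.
Proof. by rewrite /dotv big1 // => i _; rewrite mxE mul0r. Qed.
Lemma dotv_mul k l (u : 'cV[R]_k) (A : 'M[R]_(k, l)) v :
  dotv u (A *m v) = dotv (A^T *m u) v.
Proof. by rewrite !dotvE trmx_mul trmxK mulmxA. Qed.
Lemma sumvE k (u : 'cV[R]_k) : sumv u = dotv (onev R k) u.
Proof. rewrite /sumv /dotv; apply: eq_bigr => i _; by rewrite mxE mul1r. Qed.

Lemma dotv_self0 k (u : 'cV[R]_k) : dotv u u <= 0 -> u = 0.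
Proof.
move=> h.
have h0 : \sum_i u i 0 * u i 0 = 0.
  apply/le_anti; rewrite h /= sumr_ge0 // => i _; rewrite -expr2; exact: sqr_ge0.
apply/matrixP => i j; rewrite (ord1 j) mxE.
have := @psumr_eq0P R _ predT (fun i => u i 0 * u i 0) _ h0 i isT.
have : forall i0 : 'I_k, predT i0 -> 0 <= u i0 0 * u i0 0.
  move=> i0 _; rewrite -expr2; exact: sqr_ge0.
move=> H0 /(_ H0) /eqP; rewrite mulf_eq0 orbb => /eqP.
by [].
Qed.

Lemma diagmE k (v : 'I_k -> R) (w : 'cV[R]_k) i : (diagm v *m w) i 0 = v i * w i 0.
Proof. by rewrite /diagm mul_diag_mx !mxE. Qed.

Lemma col_div0 k (f t : 'I_k -> R) : (forall j, 0 < t j) ->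
  (\col_j (f j / t j) = 0 :> 'cV[R]_k) <-> (forall j, f j = 0).
Proof.
move=> ht; split => [/matrixP h j | h].
  have := h j 0; rewrite !mxE => /eqP; rewrite mulf_eq0 invr_eq0.
  by case/orP => /eqP // e; move: (ht j); rewrite e ltxx.
by apply/matrixP => i j; rewrite !mxE h mul0r.
Qed.

Lemma cV0P k (u : 'cV[R]_k) : u = 0 <-> forall j, u j 0 = 0.
Proof.
split => [-> j | h]; first by rewrite mxE.
by apply/matrixP => i j; rewrite (ord1 j) h mxE.
Qed.

End H.

Lemma Lsplit (R : realFieldType) (n m : nat)
  (C : 'M[R]_(n, m)) (b : 'I_m -> R) (dd : 'I_n -> R) (H : 'M[R]_(n, m + m))
  (c cbar : 'I_n -> R) (d : 'cV[R]_n) (F : 'cV[R]_(m + m))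
  (p q w : 'cV[R]_n) (th : 'cV[R]_m)
  (al : 'cV[R]_n) (lam : R) (eta : 'cV[R]_(m + m)) (nu : 'cV[R]_n) :
  Lagr C b dd H c cbar d F p q w th al lam eta nu =
 (\sum_j (c j / 2 * p j 0 ^+ 2 + cbar j * p j 0) - dotv al p)
 + (1/2 * dotv w (diagm dd *m w) - dotv nu (diagm dd *m w))
 + dotv (nu + al - lam *: onev R n + H *m eta) q
 - dotv ((C *m diagm b)^T *m nu) th
 + (- dotv nu d + lam * sumv d - dotv (H *m eta) d - dotv eta F).
Proof.
rewrite /Lagr !sumvE !dotvBr !mulmxBr !dotvBr !dotvDl ?dotvNl ?dotvZl.
rewrite !(@dotv_mul _ _ _ eta H^T) trmxK (@dotv_mul _ _ _ nu (C *m diagm b)).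
lra.
Qed.

Definition conds (R : realFieldType) (n m : nat)
  (C : 'M[R]_(n, m)) (b : 'I_m -> R) (dd : 'I_n -> R) (H : 'M[R]_(n, m + m))
  (c cbar : 'I_n -> R) (d : 'cV[R]_n) (F : 'cV[R]_(m + m))
  (q pi : 'cV[R]_n) (theta : 'cV[R]_m) (omega alpha : 'cV[R]_n) (eta : 'cV[R]_(m + m)) :=
 [/\ C^T *m omega = 0, q - d - diagm dd *m omega - C *m diagm b *m theta = 0,
     (forall j, q j 0 = (pi j 0 - cbar j) / c j), pi - alpha = 0 &
     sumv (q - d) = 0 /\
     (forall e, (H^T *m (q - d) - F) e 0 <= 0 /\ eta e 0 * (H^T *m (q-d) - F) e 0 = 0)].

Section S.
Variable R : realFieldType.

Lemma dotv0r k (u : 'cV[R]_k) : dotv u 0 = 0.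
Proof. by rewrite /dotv big1 // => i _; rewrite mxE mulr0. Qed.

Lemma dotv_delta k (e : 'I_k) (y : 'cV[R]_k) : dotv (delta_mx e 0) y = y e 0.
Proof.
rewrite /dotv (bigD1 e) //= big1 => [|i /negbTE ne]; rewrite !mxE ?eqxx ?ne /=.
  by rewrite mul1r addr0.
by rewrite mul0r.
Qed.

Lemma quad_le (c cb a P x : R) : 0 < c -> cb = a - c * P ->
  c/2*P^+2 + cb*P - a*P <= c/2*x^+2 + cb*x - a*x.
Proof. move=> hc ->; have := mulr_ge0 (ltW hc) (sqr_ge0 (x - P)); nra. Qed.

Lemma quad_le2 (dd w x : R) : 0 < dd ->
  1/2*(w*(dd*w)) - w*(dd*w) <= 1/2*(x*(dd*x)) - w*(dd*x).
Proof. move=> hc; have := mulr_ge0 (ltW hc) (sqr_ge0 (x - w)); nra. Qed.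

Lemma Pp_eq n (c cbar : 'I_n -> R) (al p : 'cV[R]_n) :
  \sum_j (c j / 2 * p j 0 ^+ 2 + cbar j * p j 0) - dotv al p
  = \sum_j (c j / 2 * p j 0 ^+ 2 + cbar j * p j 0 - al j 0 * p j 0).
Proof. by rewrite /dotv -sumrB. Qed.

Lemma Pw_eq n (dd : 'I_n -> R) (w nu : 'cV[R]_n) :
  1/2 * dotv w (diagm dd *m w) - dotv nu (diagm dd *m w)
  = \sum_j (1/2 * (w j 0 * (dd j * w j 0)) - nu j 0 * (dd j * w j 0)).
Proof.
rewrite /dotv mulr_sumr -sumrB; apply: eq_bigr => j _; by rewrite !diagmE.
Qed.

End S.

Lemma opt_iff (R : realFieldType) (n m : nat)
  (C : 'M[R]_(n, m)) (b : 'I_m -> R) (dd : 'I_n -> R) (H : 'M[R]_(n, m + m))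
  (c cbar : 'I_n -> R) (d : 'cV[R]_n) (F : 'cV[R]_(m + m))
  (Hb : forall e, 0 < b e) (Hdd : forall j, 0 < dd j) (Hc : forall j, 0 < c j)
  (q : 'cV[R]_n) (theta : 'cV[R]_m) (lam : R) (omega alpha : 'cV[R]_n)
  (eta : 'cV[R]_(m + m)) :
  nonnegv eta ->
  let pi := price_of H lam eta omega in
  let p : 'cV[R]_n := \col_j ((pi j 0 - cbar j) / c j) in
  optimal_primal_dual C b dd H c cbar d F p q omega theta alpha lam eta omega
  <-> conds C b dd H c cbar d F q pi theta omega alpha eta.
Proof.
move=> Heta pi p.
set g := omega + alpha - lam *: onev R n + H *m eta.
set gt := (C *m diagm b)^T *m omega.
have Epg : pi - alpha = - g.
  by apply/matrixP => i j; rewrite /pi /price_of /g !mxE; lra.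
have Egt : forall e, gt e 0 = b e * (C^T *m omega) e 0.
  by move=> e; rewrite /gt trmx_mul /diagm tr_diag_mx -mulmxA -/(diagm b) diagmE.
set y := H^T *m (q - d) - F.
set r := q - d - diagm dd *m omega - C *m diagm b *m theta.
split.
- case=> _ Hmin Hmax.
  have g0 : g = 0.
    apply: dotv_self0; have := Hmin p (q - g) omega theta.
    rewrite !Lsplit -/g dotvBr; lra.
  have gt0 : gt = 0.
    apply: dotv_self0; have := Hmin p q omega (theta + gt).
    rewrite !Lsplit -/gt dotvDr; lra.
  split.
  + apply/cV0P => e; have := Egt e; rewrite gt0 mxE => /esym/eqP.
    by rewrite mulf_eq0 (gt_eqF (Hb e)) /= => /eqP.
  + apply: dotv_self0; have := Hmax alpha lam eta (omega + r) Heta.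
    rewrite /Lagr -/r dotvDl; lra.
  + have qp : q - p = 0.
      apply: dotv_self0; have := Hmax (alpha + (q - p)) lam eta omega Heta.
      rewrite /Lagr dotvDl; lra.
    by move=> j; move/cV0P: qp => /(_ j); rewrite !mxE => /eqP; rewrite subr_eq0 => /eqP.
  + by rewrite Epg g0 oppr0.
  split.
  + set s := sumv (q - d).
    have := Hmax alpha (lam - s) eta omega Heta; rewrite /Lagr -/s => h.
    have : s ^+ 2 <= 0 by rewrite expr2; lra.
    by rewrite le_eqVlt ltNge sqr_ge0 orbF sqrf_eq0 => /eqP.
  have yle : forall e, y e 0 <= 0.
    move=> e.
    have hn : nonnegv (eta + delta_mx e 0).
      move=> i; rewrite !mxE; apply: addr_ge0; first exact: Heta.
      by case: (_ && _).
    have := Hmax alpha lam (eta + delta_mx e 0) omega hn.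
    rewrite /Lagr -/y dotvDl dotv_delta; lra.
  have hy0 : 0 <= dotv eta y.
    have hn : nonnegv (0 : 'cV[R]_(m + m)) by move=> i; rewrite mxE.
    have := Hmax alpha lam 0 omega hn.
    rewrite /Lagr -/y dotv0l; lra.
  move=> e; split; first exact: yle.
  have hs : \sum_i - (eta i 0 * y i 0) = 0.
    apply/le_anti/andP; split; first by rewrite sumrN oppr_le0; exact: hy0.
    rewrite sumr_ge0 // => i _; rewrite oppr_ge0 mulr_ge0_le0 //; exact: Heta.
  have hF : forall i, predT i -> 0 <= - (eta i 0 * y i 0).
    move=> i _; rewrite oppr_ge0 mulr_ge0_le0 //; exact: Heta.
  have := @psumr_eq0P R _ predT (fun i => - (eta i 0 * y i 0)) hF hs e isT.
  by move/eqP; rewrite oppr_eq0 => /eqP.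
- case=> E1 E2 E3 E4 [E5 E6].
  have g0 : g = 0 by apply: oppr_inj; rewrite -Epg E4 oppr0.
  have gt0 : gt = 0 by apply/cV0P => e; rewrite Egt E1 mxE mulr0.
  split => //.
  + move=> p' q' w' th'; rewrite !Lsplit -/g -/gt g0 gt0 !dotv0l !Pp_eq !Pw_eq !subr0 !addr0.
    have ha : forall j, alpha j 0 = pi j 0.
      move=> j; move/cV0P: E4 => /(_ j); rewrite !mxE => /eqP; rewrite subr_eq0 => /eqP //.
    apply: lerD; last exact: lexx.
    apply: lerD; apply: ler_sum => j _.
   
      apply: quad_le; first exact: Hc.
      have hpj : p j 0 = (pi j 0 - cbar j) / c j by rewrite /p mxE.
      rewrite ha hpj; field; exact: lt0r_neq0.
    exact: quad_le2.
  + move=> al' lam' eta' nu' hn.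
    have qp : q - p = 0.
      apply/cV0P => j; have hpj : p j 0 = (pi j 0 - cbar j) / c j by rewrite /p mxE.
      by rewrite mxE mxE hpj E3 subrr.
    rewrite /Lagr -/r -/y (_ : r = 0) // qp E5 !dotv0r.
    have h1 : dotv eta' y <= 0.
      rewrite /dotv sumr_le0 // => i _; by rewrite mulr_ge0_le0 ?hn ?(E6 i).1.
    have h2 : dotv eta y = 0.
      by rewrite /dotv big1 // => i _; exact: (E6 i).2.
    lra.
Qed.

Lemma equil_iff (R : realFieldType) (n m : nat)
  (C : 'M[R]_(n, m)) (b : 'I_m -> R) (dd mm : 'I_n -> R) (H : 'M[R]_(n, m + m))
  (c cbar : 'I_n -> R) (rho : R)
  (tq tau : 'I_n -> R) (tl : R) (te : 'I_(m + m) -> R)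
  (d : 'cV[R]_n) (F : 'cV[R]_(m + m))
  (Hmm : forall j, 0 < mm j) (Htq : forall j, 0 < tq j) (Htl : 0 < tl)
  (Hte : forall e, 0 < te e) (Htau : forall j, 0 < tau j)
  (qhat : 'cV[R]_n) (theta : 'cV[R]_m)
  (lam : R) (omega alpha : 'cV[R]_n) (eta : 'cV[R]_(m + m)) :
  nonnegv eta ->
  let pi := price_of H lam eta omega in
  let q := q_of rho pi alpha qhat in
  is_equilibrium C b dd mm H c cbar rho tq tau tl te d F qhat theta lam omega alpha eta
  <-> conds C b dd H c cbar d F q pi theta omega alpha eta.
Proof.
move=> Heta pi q; rewrite /is_equilibrium -/pi -/q.
set y := H^T *m (q - d) - F.
set r := q - d - diagm dd *m omega - C *m diagm b *m theta.
have e1 : (\col_j (r j 0 / mm j) = 0) <-> r = 0.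
  rewrite col_div0 // cV0P; done.
have e2 : (\col_j ((q j 0 - (pi j 0 - cbar j) / c j) / tau j) = 0) <->
          (forall j, q j 0 = (pi j 0 - cbar j) / c j).
  rewrite col_div0 //; split=> h j; move: (h j); first by move/eqP; rewrite subr_eq0 => /eqP.
  by move=> ->; rewrite subrr.
have e3 : (\col_j ((pi - alpha) j 0 / tq j) = 0) <-> pi - alpha = 0.
  by rewrite col_div0 // cV0P.
have e4 : (- sumv (q - d) / tl = 0) <-> sumv (q - d) = 0.
  split=> [/eqP|->]; last by rewrite oppr0 mul0r.
  by rewrite mulf_eq0 invr_eq0 oppr_eq0 (gt_eqF Htl) orbF => /eqP.
have e5 : (\col_e ((projp y eta) e 0 / te e) = 0) <->
   (forall e, y e 0 <= 0 /\ eta e 0 * y e 0 = 0).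
  rewrite col_div0 //; split => h e; move: (h e); rewrite /projp mxE.
    case: ifP => [_ -> | ]; first by rewrite lexx mulr0.
    move/negbT; rewrite negb_or -!leNgt => /andP [hy he] _; split => //.
    by rewrite (@le_anti _ _ (eta e 0) 0) ?mul0r // he Heta.
  case=> hy hz; case: ifP => // /orP [hy' | he].
    by move: hy; rewrite leNgt hy'.
  by move/eqP: hz; rewrite mulf_eq0 (gt_eqF he) /= => /eqP.
rewrite /conds; split.
  case=> [a0 a1 a2 a3 [a4 a5]]; split; [done | exact/e1 | exact/e2 | exact/e3 |].
  by split; [exact/e4 | exact/e5].
case=> [a0 a1 a2 a3 [a4 a5]]; split; [done | exact/e1 | exact/e2 | exact/e3 |].
by split; [exact/e4 | exact/e5].
Qed.
Theorem theorem4 (R : realFieldType) (n m : nat) (src dst : 'I_m -> 'I_n)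
  (Hloop : forall e, src e != dst e)
  (Hconn : graph_connected src dst)
  (b : 'I_m -> R) (Hb : forall e, 0 < b e)
  (dd : 'I_n -> R) (Hdd : forall j, 0 < dd j)
  (mm : 'I_n -> R) (Hmm : forall j, 0 < mm j)
  (tq : 'I_n -> R) (Htq : forall j, 0 < tq j)
  (tl : R) (Htl : 0 < tl)
  (te : 'I_(m + m) -> R) (Hte : forall e, 0 < te e)
  (tau : 'I_n -> R) (Htau : forall j, 0 < tau j)
  (c cbar : 'I_n -> R) (Hc : forall j, 0 < c j)
  (rho : R) (Hrho : 0 < rho)
  (Ldag : 'M[R]_n)
  (HLdag : is_MP_inverse (incidence R src dst *m diagm b *m (incidence R src dst)^T) Ldag)
  (Fbar Funder : 'cV[R]_m) (d : 'cV[R]_n) :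
  let C := incidence R src dst in
  let H := Hmat C b Ldag in
  let F := col_mx Fbar (- Funder) in
  forall (qhat : 'cV[R]_n) (theta : 'cV[R]_m)
         (lam : R) (omega alpha : 'cV[R]_n) (eta : 'cV[R]_(m + m)),
  nonnegv eta ->
  let pi := price_of H lam eta omega in
  let q := q_of rho pi alpha qhat in
  let p : 'cV[R]_n := \col_j ((pi j 0 - cbar j) / c j) in
  is_equilibrium C b dd mm H c cbar rho tq tau tl te d F qhat theta lam omega alpha eta
  <-> optimal_primal_dual C b dd H c cbar d F p q omega theta alpha lam eta omega.
Proof.
move=> C H F qhat theta lam omega alpha eta Heta pi q p.
apply: iff_trans.
  by apply: equil_iff.
by apply: iff_sym; apply: opt_iff.
Qed.
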